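(* Let $\mathcal G=(V,E,\lambda)$ be a temporal graph with lifetime $T_{\max}$, let $\delta\in\mathbb N^+$, let $S\subseteq V\times[0,T_{\max}]$ be a set of seed infections, and let $L_1,L_2\subseteq V^2\times[0,T_{\max}]$ be two infection logs consistent with $S$. Then the induced infection timetables $T_i=\{(v,t)\mid (u,v,t)\in L_i\}$, $i=1,2$, are equal: $T_1=T_2$.
   Context: A temporal graph $\mathcal G=(V,E,\lambda)$ with lifetime $T_{\max}$ consists of a finite undirected static graph $(V,E)$ and a labeling $\lambda:E\to\{1,\dots,T_{\max}\}$; edge $e$ is present only at time $\lambda(e)$. Infection model with parameter $\delta$: given seed infections $S$, a seed $(u,t)$ makes $u$ infected at time $t$; otherwise a susceptible node $u$ becomes infected at time $t$ iff some neighbour $v$ infectious at time $t$ has $\lambda(uv)=t$; if several such neighbours exist, $u$ is infected by exactly one of them (any one). A node infected at time $t$ is infectious at times $t+1,\dots,t+\delta$ and resistant afterwards. The infection log of an infection chain is the set of triples $(u,v,t)$ meaning $u$ infected $v$ at time $t$ (a seed infection of $u$ at $t$ is recorded as $(u,u,t)$). A log is consistent with $S$ if some infection chain seeded with $S$ produces it. *)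

(* Defs.v *)
From mathcomp Require Import all_boot.
Set Implicit Arguments. Unset Strict Implicit. Unset Printing Implicit Defensive.

(* The label of
   the undirected edge {u,v} is tg_lam u v = tg_lam v u; values of tg_lam
   on non-edges are irrelevant. *)
Record temporal_graph (V : finType) (Tmax : nat) := TemporalGraph {
  tg_adj : rel V;
  tg_lam : V -> V -> nat;
  tg_sym : symmetric tg_adj;
  tg_irr : irreflexive tg_adj;
  tg_lam_sym : forall u v, tg_lam u v = tg_lam v u;
  tg_lam_range : forall u v, tg_adj u v -> 0 < tg_lam u v <= Tmax
}.

Section Infection.
Variables (V : finType) (Tmax : nat).
Notation time := 'I_Tmax.+1.

(* An infection chain: for each node v, either None (never infected) or
   Some (u, t): v was infected by u at time t (u = v for a seed infection). *)
Definition chain := V -> option (V * time).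

Definition infectious (delta : nat) (f : chain) (v : V) (t : nat) : Prop :=
  exists (u : V) (t' : time), f v = Some (u, t') /\ t' < t <= t' + delta.

Definition susceptible (f : chain) (v : V) (t : nat) : Prop :=
  forall (u : V) (t' : time), f v = Some (u, t') -> t <= t'.

Definition is_infection_chain (G : temporal_graph V Tmax) (delta : nat)
    (S : {set V * time}) (f : chain) : Prop :=
  (forall (v u : V) (t : time), f v = Some (u, t) ->
      ((v, t) \in S /\ u = v)
      \/ ((v, t) \notin S /\ tg_adj G u v /\ tg_lam G u v = t
          /\ infectious delta f u t))
  /\
  (forall (v : V) (t : time), susceptible f v t ->
      ((v, t) \in S \/
       exists u, tg_adj G u v /\ tg_lam G u v = t /\ infectious delta f u t) ->
      exists u, f v = Some (u, t)).

Definition infection_log (f : chain) : {set V * V * time} :=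
  [set x : V * V * time | f x.1.2 == Some (x.1.1, x.2)].

Definition consistent_log (G : temporal_graph V Tmax) (delta : nat)
    (S : {set V * time}) (L : {set V * V * time}) : Prop :=
  exists f : chain, is_infection_chain G delta S f /\ L = infection_log f.

Definition timetable (L : {set V * V * time}) : {set V * time} :=
  [set x : V * time | [exists u : V, ((u, x.1), x.2) \in L]].

End Infection.

(* Main.v *)
Require Import Defs.
From mathcomp Require Import all_boot.

Section Aux.
Variables (V : finType) (Tmax : nat) (G : temporal_graph V Tmax) (delta : nat)
  (S : {set V * 'I_Tmax.+1}).

Definition Pinf (f : chain V Tmax) (v : V) (t : 'I_Tmax.+1) :=
  exists u, f v = Some (u, t).

Lemma step_inf (f1 f2 : chain V Tmax) :
  is_infection_chain G delta S f1 -> is_infection_chain G delta S f2 ->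
  forall (t : 'I_Tmax.+1),
  (forall v (t' : 'I_Tmax.+1), t' < t -> (Pinf f1 v t' <-> Pinf f2 v t')) ->
  forall v, Pinf f1 v t -> Pinf f2 v t.
Proof.
move=> [sound1 _] [_ compl2] t IH v [u Hu].
have Hsus : susceptible f2 v t.
  move=> u' t'' H2; rewrite leqNgt; apply/negP => Hlt.
  have [u'' H1] : Pinf f1 v t'' by apply/(IH v t'' Hlt); exists u'.
  rewrite Hu in H1; case: H1 => _ e.
  by move: Hlt; rewrite e ltnn.
apply: (compl2 v t Hsus).
have [[HS _]|[HS [Hadj [Hlam [w [t' [Hw Ht]]]]]]] := sound1 v u t Hu.
  by left.
right; exists u; split => //; split => //.
have Hlt : t' < t by case/andP: Ht.
have [w' Hw'] : Pinf f2 u t' by apply/(IH u t' Hlt); exists w.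
by exists w', t'.
Qed.

Lemma agree (f1 f2 : chain V Tmax) :
  is_infection_chain G delta S f1 -> is_infection_chain G delta S f2 ->
  forall n v (t : 'I_Tmax.+1), t <= n -> (Pinf f1 v t <-> Pinf f2 v t).
Proof.
move=> H1 H2; elim=> [|n IHn] v t Ht.
  have IH0 : forall v (t' : 'I_Tmax.+1), t' < t -> (Pinf f1 v t' <-> Pinf f2 v t').
    by move=> w t' Hlt; move: Ht; rewrite leqn0 => /eqP e; rewrite e in Hlt.
  split; first exact: (step_inf _ _ H1 H2 _ IH0).
by apply: (step_inf _ _ H2 H1 t (fun w t' h => iff_sym (IH0 w t' h))).
have IH0 : forall v (t' : 'I_Tmax.+1), t' < t -> (Pinf f1 v t' <-> Pinf f2 v t').
  by move=> w t' Hlt; apply: IHn; rewrite -ltnS; exact: leq_trans Hlt Ht.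
split; first exact: (step_inf _ _ H1 H2 _ IH0).
by apply: (step_inf _ _ H2 H1 t (fun w t' h => iff_sym (IH0 w t' h))).
Qed.
End Aux.

Theorem mainTheorem5 (V : finType) (Tmax : nat) (G : temporal_graph V Tmax)
    (delta : nat) (S : {set V * 'I_Tmax.+1}) (L1 L2 : {set V * V * 'I_Tmax.+1}) :
  0 < delta ->
  consistent_log G delta S L1 ->
  consistent_log G delta S L2 ->
  timetable L1 = timetable L2.
Proof.
move=> _ [f1 [H1 ->]] [f2 [H2 ->]].
apply/setP => -[v t]; rewrite !inE /=.
have := @agree _ _ _ _ _ _ _ H1 H2 t v t (leqnn t).
move=> [A B].
apply/existsP/existsP => -[u]; rewrite inE /= => /eqP Hu.
  by have [u' Hu'] := A (ex_intro _ u Hu); exists u'; rewrite inE /= Hu'.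
by have [u' Hu'] := B (ex_intro _ u Hu); exists u'; rewrite inE /= Hu'.
Qed.
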